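(* Let $k$ be a positive integer. Let $h_1,\dots,h_k$ be i.i.d. hyperparameter configurations sampled from a fixed distribution $\mathcal{D}_{\mathcal{H}}$, and let $X_1,\dots,X_k\in[0,1]$ be the accuracies of the models trained with $h_1,\dots,h_k$ respectively (so $X_1,\dots,X_k$ are i.i.d. copies of a random variable $X$ with cumulative distribution function $F_X$). Let $\widehat{F}_k(t)=\frac1k\sum_{i=1}^k \mathbf{1}_{X_i\le t}$ be the empirical cumulative distribution function of $X_1,\dots,X_k$, let $Y_j=\max_{i\le j}X_i$, and let $\Delta_{k+1}=Y_{k+1}-Y_k$ denote the accuracy gain from sampling the $(k+1)$-th hyperparameter $h_{k+1}\sim\mathcal{D}_{\mathcal{H}}$. Then, with probability at least $1-\frac{1}{\sqrt{k}}$ (over the draw of $X_1,\dots,X_k$), $$\mathbb{E}_{h_{k+1}\sim\mathcal{D}_{\mathcal{H}}}\left[\Delta_{k+1}\right]=\int_0^1 \left(\widehat{F}_k(t)\right)^{k}\left(1-\widehat{F}_k(t)\right)\,dt+\epsilon_{\mathrm{error}}$$ where $\epsilon_{\mathrm{error}}\le 6\sqrt{\frac{\log k}{k}}$.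
   Context: Model accuracies take values in $[0,1]$. The expected accuracy gain $\mathbb{E}_{h_{k+1}\sim\mathcal{D}_{\mathcal{H}}}[\Delta_{k+1}]$ is the paper's notation for $\mathbb{E}[Y_{k+1}-Y_k]$, where $X_{k+1}$ is the accuracy obtained with a fresh independent sample $h_{k+1}\sim\mathcal{D}_{\mathcal{H}}$. $\log$ is the natural logarithm. *)

(* Defs.v *)
From HB Require Import structures.
From mathcomp Require Import all_boot all_order all_algebra.
From mathcomp Require Import all_classical all_reals all_analysis.
Set Implicit Arguments. Unset Strict Implicit. Unset Printing Implicit Defensive.
Import Order.TTheory GRing.Theory Num.Theory.
Import numFieldNormedType.Exports.
Local Open Scope classical_set_scope.
Local Open Scope ring_scope.

Section defs.
Context {R : realType} {d : measure_display} {T : measurableType d}.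

(* Mutual independence of the real random variables X 0, ..., X (n-1):
   product rule for every family of Borel sets (taking B i = setT gives
   every finite subfamily). *)
Definition mutually_independent (P : probability T R) (n : nat)
    (X : nat -> T -> R) : Prop :=
  forall B : nat -> set R, (forall i, measurable (B i)) ->
    P [set w | forall i, (i < n)%N -> B i (X i w)]
    = (\prod_(i < n) P (X i @^-1` B i))%E.

Definition identically_distributed (P : probability T R) (n : nat)
    (X : nat -> T -> R) : Prop :=
  forall i, (i < n)%N -> forall B : set R, measurable B ->
    P (X i @^-1` B) = P (X 0%N @^-1` B).

(* Empirical CDF of X 0, ..., X (k-1) (paper's X_1..X_k) at t. *)
Definition ecdf (k : nat) (X : nat -> T -> R) (w : T) (t : R) : R :=
  (k%:R)^-1 * \sum_(i < k) ((X i w <= t)%R%:R : R).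

(* Y_j = max_{i <= j} X_i, i.e. max of X 0, ..., X (j-1) (values in [0,1],
   so the seed 0 is harmless for j >= 1). *)
Definition Ymax (j : nat) (X : nat -> T -> R) (w : T) : R :=
  \big[Num.max/0]_(i < j) X i w.

End defs.

(* Main.v *)
Require Import Defs.
From HB Require Import structures.
From mathcomp Require Import all_boot all_order all_algebra.
From mathcomp Require Import all_classical all_reals all_analysis.
From mathcomp Require Import lra.
Import Order.TTheory GRing.Theory Num.Theory.
Import numFieldNormedType.Exports.
Local Open Scope classical_set_scope.
Local Open Scope ring_scope.

Lemma pow_bound (R : realType) (r : R) n : 0 <= r <= 1 ->
  n.+1%:R * (r ^+ n * (1 - r)) <= 1 - r ^+ n.+1.
Proof.
move=> /andP[r0 r1]; elim: n => [|n IH]; first by rewrite expr0 expr1 mul1r mul1r.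
have a0 : 0 <= r ^+ n by exact: exprn_ge0.
have a1 : r ^+ n <= 1 by exact: exprn_ile1.
move: IH; rewrite !exprS -[n.+2]addn1 natrD; set a := r ^+ n; set N := n.+1%:R.
move=> IH.
have N0 : 0 <= N by [].
have h1 : 0 <= r * (1 - r * a - N * (a * (1 - r))) by apply: mulr_ge0; lra.
have ra1 : r * a <= 1 by rewrite mulr_ile1.
have h2 : 0 <= (1 - r) * (1 - r * a) by apply: mulr_ge0; lra.
nra.
Qed.

Lemma count_ge (R : realType) (m : nat) (c : R) : 0 <= c <= m%:R ->
  c <= \sum_(j < m) (((j%:R : R) < c)%R%:R : R).
Proof.
elim: m c => [|m IH] c /andP[c0 cm].
  by rewrite big_ord0; move: cm; rewrite /= => ->.
rewrite big_ord_recr /=.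
have [cm'|cm'] := leP c m%:R.
  have := IH c; rewrite c0 cm' => /(_ isT) h.
  by apply: (le_trans h); rewrite lerDl; case: ((m%:R : R) < c)%R.
have -> : \sum_(i < m) (((i%:R : R) < c)%R%:R : R) = m%:R.
  rewrite (eq_bigr (fun _ => 1)); last first.
    move=> i _; have : (i%:R : R) < c.
      apply: le_lt_trans cm'; rewrite ler_nat; exact: ltnW.
    by move=> ->.
  by rewrite sumr_const card_ord.
move: cm; rewrite -natr1 /=.
lra.
Qed.

Lemma count_le (R : realType) (m : nat) (c : R) : 0 <= c ->
  \sum_(j < m) (((j%:R : R) < c)%R%:R : R) <= c + 1.
Proof.
move=> c0; elim: m => [|m IH]; first by rewrite big_ord0; lra.
rewrite big_ord_recr /=.
case: ltP => h; last by rewrite addr0.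
have : \sum_(i < m) (((i%:R : R) < c)%R%:R : R) <= m%:R.
  apply: (@le_trans _ _ (\sum_(i < m) (1:R))).
    by apply: ler_sum => i _; case: ((i%:R : R) < c)%R.
  by rewrite sumr_const card_ord.
rewrite /=; lra.
Qed.

Lemma gap_bound (R : realType) (k : nat) (x y : R) : 0 <= x <= 1 -> 0 <= y <= 1 ->
  Num.max y x - y <= (k.+1%:R)^-1 + \sum_(j < k.+1)
     (k.+1%:R)^-1 * (((y <= j%:R / k.+1%:R) && (j%:R / k.+1%:R < x))%R%:R).
Proof.
move=> /andP[x0 x1] /andP[y0 y1].
set m : R := k.+1%:R.
have m0 : 0 < m by rewrite ltr0n.
have S0 : 0 <= \sum_(j < k.+1)
     m^-1 * (((y <= j%:R / m) && (j%:R / m < x))%R%:R).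
  apply: sumr_ge0 => j _; apply: mulr_ge0; first by rewrite invr_ge0 ltW.
  exact: ler0n.
have [yx|xy] := ltP y x; last first.
  rewrite subrr; apply: addr_ge0 => //; by rewrite invr_ge0 ltW.
rewrite -mulr_sumr.
have E : forall j : 'I_k.+1, (((y <= j%:R / m) && (j%:R / m < x))%R%:R : R)
   = ((j%:R < x * m)%R%:R : R) - ((j%:R < y * m)%R%:R : R).
  move=> j; rewrite -!ltr_pdivrMr //.
  case: (leP y (j%:R / m)) => h1 /=.
    by rewrite subr0.
  by rewrite (lt_trans h1 yx) subrr.
rewrite (eq_bigr _ (fun j _ => E j)) sumrB.
have L1 := @count_ge R k.+1 (x * m).
have L2 := @count_le R k.+1 (y * m).
have xm0 : 0 <= x * m by rewrite mulr_ge0 // ltW.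
have xm1 : x * m <= k.+1%:R by rewrite -/m ler_piMl // ltW.
have ym0 : 0 <= y * m by rewrite mulr_ge0 // ltW.
have := L1 (introT andP (conj xm0 xm1)) ; have := L2 ym0.
set A := \sum_(i < k.+1) _; set B := \sum_(i < k.+1) _.
move=> hB hA.
rewrite (_ : x - y = m^-1 * (x * m - y * m)); last first.
  by rewrite -mulrBl mulrCA mulVf ?mulr1 // lt0r_neq0.
rewrite -[X in _ <= X + _]mulr1 -mulrDr.
apply: ler_wpM2l; first by rewrite invr_ge0 ltW.
lra.
Qed.

Lemma ln_bound (R : realType) (k : nat) : (2 <= k)%N ->
  2 / k.+1%:R <= 6 * Num.sqrt (ln (k%:R : R) / k%:R).
Proof.
move=> k2.
set K : R := k%:R.
have K2 : 2 <= K by rewrite /K ler_nat.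
have K0 : 0 < K by lra.
have lnK1 : 1 - K^-1 <= ln K.
  have := expR_ge1Dx (- ln K); rewrite expRN lnK ?posrE //; lra.
have iK : K * K^-1 = 1 by rewrite mulfV // lt0r_neq0.
have iK0 : 0 < K^-1 by rewrite invr_gt0.
have lnK2 : 1/2 <= ln K by nra.
set a : R := (k.+1%:R)^-1.
have Ka : k.+1%:R = K + 1 by rewrite -natr1.
have a0 : 0 < a by rewrite invr_gt0 ltr0n.
have aK : a * (K + 1) = 1 by rewrite -Ka mulVf // pnatr_eq0.
have h : a ^+ 2 <= ln K / K.
  rewrite ler_pdivlMr //; nra.
have : Num.sqrt (a ^+ 2) <= Num.sqrt (ln K / K).
  by rewrite ler_sqrt // divr_ge0 //; lra.
rewrite sqrtr_sqr ger0_norm; last exact: ltW.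
move=> hs.
apply: (@le_trans _ _ (6 * a)).
  apply: ler_wpM2r; [exact: ltW | lra].
by apply: ler_wpM2l; [lra | exact: hs].
Qed.

Lemma prod_bound (R : realType) (k : nat) (p : \bar R) :
  (0 <= p)%E -> (p <= 1)%E ->
  ((\prod_(i < k) p) * (1 - p) <= ((k.+1%:R)^-1)%:E)%E.
Proof.
case: p => [r| |] r0 r1; last by move: r0; rewrite leeNy_eq.
  2: by move: r1; rewrite leye_eq.
  rewrite lee_fin in r0; rewrite lee_fin in r1.
  rewrite prodEFin prodr_const card_ord -EFinB -EFinM lee_fin.
  have := @pow_bound R r k; rewrite r0 r1 => /(_ isT) h.
  rewrite -(@ler_pM2l _ (k.+1%:R)) ?ltr0n // mulfV ?pnatr_eq0 //.
  have : 0 <= r ^+ k.+1 by exact: exprn_ge0.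
  lra.
Qed.

Lemma YmaxL (R : realType) d (T : measurableType d) (X : nat -> T -> R) w j :
  Ymax j.+1 X w = Num.max (X 0%N w) (Ymax j (fun i => X i.+1) w).
Proof. exact: big_ord_recl. Qed.
Lemma Ymax0 (R : realType) d (T : measurableType d) (X : nat -> T -> R) w :
  Ymax 0 X w = 0.
Proof. exact: big_ord0. Qed.
Lemma YmaxS (R : realType) d (T : measurableType d) (X : nat -> T -> R) w j :
  Ymax j.+1 X w = Num.max (Ymax j X w) (X j w).
Proof.
elim: j X => [|j IH] X; first by rewrite YmaxL !Ymax0 maxC.
by rewrite YmaxL IH YmaxL maxA.
Qed.

Lemma Ymax_ge (R : realType) d (T : measurableType d) (X : nat -> T -> R) w j i :
  (i < j)%N -> X i w <= Ymax j X w.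
Proof.
elim: j => [//|j IH] ij.
rewrite YmaxS le_max.
rewrite ltnS leq_eqVlt in ij; case/orP: ij => [/eqP ->|ij].
  by rewrite lexx orbT.
by rewrite IH.
Qed.

Lemma Ymax_01 (R : realType) d (T : measurableType d) (X : nat -> T -> R) w j :
  (forall i w, 0 <= X i w <= 1) -> 0 <= Ymax j X w <= 1.
Proof.
move=> X01; elim: j => [|j IH]; first by rewrite Ymax0 lexx ler01.
rewrite YmaxS le_max ge_max.
case/andP: IH => -> ->; case/andP: (X01 j w) => _ ->.
by [].
Qed.

Lemma Ymax_meas (R : realType) d (T : measurableType d) (X : nat -> T -> R) j :
  (forall i, measurable_fun setT (X i)) -> measurable_fun setT (Ymax j X).
Proof.
move=> mX; elim: j => [|j IH].
  rewrite (_ : Ymax 0 X = cst 0); first exact: measurable_cst.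
  by apply/funext => w; rewrite Ymax0.
rewrite (_ : Ymax j.+1 X = (Ymax j X) \max (X j)).
  exact: measurable_realfun.measurable_maxr.
by apply/funext => w; rewrite YmaxS.
Qed.

Theorem theorem2 (R : realType) (d : measure_display) (T : measurableType d)
    (P : probability T R) (X : nat -> T -> R) (k : nat) :
  (0 < k)%N ->
  (forall i, measurable_fun setT (X i)) ->
  mutually_independent P k.+1 X ->
  identically_distributed P k.+1 X ->
  (forall i w, 0 <= X i w <= 1) ->
  ((1 - (Num.sqrt (k%:R))^-1)%:E <=
   P [set w | ('E_P[fun v => (Ymax k.+1 X v - Ymax k X v)%R]
       <= \int[@lebesgue_measure R]_(t in `[0%R, 1%R]%classic)
            ((ecdf k X w t) ^+ k * (1 - ecdf k X w t))%:E
          + (6 * Num.sqrt (ln (k%:R) / k%:R))%:E)%E])%E.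
Proof.
move=> k0 mX indep ident X01.
have [k1|k2] : k = 1%N \/ (2 <= k)%N by move: k0; case: (k) => [|[|k']]; auto.
  by rewrite k1 sqrtr1 invr1 subrr; exact: measure_ge0.
set m : R := k.+1%:R.
have m0 : 0 < m by rewrite ltr0n.
set c : R := m^-1.
have c0 : 0 <= c by rewrite invr_ge0 ltW.
pose t (j : nat) : R := j%:R / m.
pose B (j i : nat) : set R :=
  if (i < k)%N then `]-oo, t j]%classic else `]t j, +oo[%classic.
have mB : forall j i, measurable (B j i).
  by move=> j i; rewrite /B; case: ifP => _; exact: measurable_itv.
pose A (j : nat) := [set w | forall i, (i < k.+1)%N -> B j i (X i w)].
have mpre : forall i (S : set R), measurable S -> measurable (X i @^-1` S).
  by move=> i S mS; rewrite -[X i @^-1` S]setTI; exact: (mX i measurableT S mS).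
have mA : forall j, measurable (A j).
  move=> j; rewrite (_ : A j = \bigcap_(i in [set i | (i < k.+1)%N]) (X i @^-1` B j i)) //.
  apply: bigcap_measurableType => i _; exact: mpre.
have PA : forall j, (P (A j) <= c%:E)%E.
  move=> j; rewrite /A indep //.
  rewrite big_ord_recr /=.
  set p := P (X 0%N @^-1` `]-oo, t j]%classic).
  rewrite (eq_bigr (fun _ => p)); last first.
    move=> i _; rewrite /B ltn_ord ident //.
    by apply: (ltn_trans (ltn_ord i)).
  rewrite /B ltnn ident // -setCitvl preimage_setC probability_setC; last first.
    exact: (mpre 0%N _ (measurable_itv `]-oo, t j])).
  rewrite -/p.
  apply: prod_bound; first exact: measure_ge0.
  by apply: probability_le1; exact: (mpre 0%N _ (measurable_itv `]-oo, t j])).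
have mY : forall j, measurable_fun setT (Ymax j X) by move=> j; exact: Ymax_meas.
pose G (w : T) : R := c + \sum_(j < k.+1) c * \1_(A j) w.
have G0 : forall w, 0 <= G w.
  move=> w; apply: addr_ge0 => //; apply: sumr_ge0 => j _.
  by apply: mulr_ge0 => //; rewrite indicE ler0n.
have DG : forall w, Ymax k.+1 X w - Ymax k X w <= G w.
  move=> w; rewrite YmaxS.
  apply: le_trans (@gap_bound R k _ _ (X01 k w) (@Ymax_01 _ _ _ X w k X01)) _.
  rewrite lerD2l; apply: ler_sum => j _; apply: ler_wpM2l => //.
  rewrite indicE; case: andP => [[h1 h2]|_]; last exact: ler0n.
  rewrite mem_set //= => i; rewrite ltnS leq_eqVlt => /orP [/eqP ->|ilt].
    by rewrite /B ltnn /= in_itv /= andbT.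
  rewrite /B ilt /= in_itv /=.
  exact: le_trans (@Ymax_ge _ _ _ X w _ _ ilt) h1.
have mG : measurable_fun setT G.
  apply: measurable_realfun.measurable_funD; first exact: measurable_cst.
  apply: measurable_sum => j.
  apply: measurable_realfun.measurable_funM; first exact: measurable_cst.
  exact: measurable_realfun.measurable_indic.
have EG : ('E_P[G] <= (2 * c)%:E)%E.
  have -> : ('E_P[G] = \int[P]_w (G w)%:E)%E by rewrite unlock.
  have -> : (fun w => (G w)%:E) =
      (fun w => c%:E + \sum_(j < k.+1) (c%:E * (\1_(A j) w)%:E))%E.
    apply/funext => w; rewrite /G EFinD; under [in RHS]eq_bigr do rewrite -EFinM.
    by rewrite sumEFin.
  rewrite ge0_integralD //; last 2 first.
  - by move=> w _; apply: sume_ge0 => j _; rewrite -EFinM lee_fin mulr_ge0 // indicE ler0n.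
  - apply: emeasurable_sum => j; apply/measurable_realfun.measurable_EFinP.
    apply: measurable_realfun.measurable_funM; first exact: measurable_cst.
    exact: measurable_realfun.measurable_indic.
  rewrite integral_cst //.
  rewrite (_ : (c%:E * _ setT = c%:E)%E); last by rewrite [X in (_ * X)%E](probability_setT P) mule1.
  rewrite ge0_integral_sum //; last 2 first.
  - move=> j; apply/measurable_realfun.measurable_EFinP.
    apply: measurable_realfun.measurable_funM; first exact: measurable_cst.
    exact: measurable_realfun.measurable_indic.
  - by move=> j w _; rewrite -EFinM lee_fin mulr_ge0 // indicE ler0n.
  have -> : (\sum_(j < k.+1) \int[P]_w (c%:E * (\1_(A j) w)%:E))%E =
      (\sum_(j < k.+1) (c%:E * P (A j)))%E.
    apply: eq_bigr => j _.
    rewrite (@ge0_integralZl_EFin _ _ _ P setT measurableT (fun w => (\1_(A j) w)%:E)) //.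
    - by rewrite integral_indic // setIT.
    - by apply/measurable_realfun.measurable_EFinP; exact: measurable_realfun.measurable_indic.
  apply: (@le_trans _ _ (c%:E + \sum_(j < k.+1) (c * c)%:E)%E).
    apply: leeD2l; apply: lee_sum => j _; rewrite EFinM.
    by apply: lee_wpmul2l => //; rewrite lee_fin.
  rewrite sumEFin sumr_const card_ord -EFinD lee_fin.
  have -> : c * c *+ k.+1 = c * (c * m) by rewrite /m mulrA mulr_natr.
  rewrite /c mulVf ?lt0r_neq0 // mulr1.
  rewrite (mulrC 2); set z := m^-1; lra.
have EB : ('E_P[fun v => (Ymax k.+1 X v - Ymax k X v)%R] <= (2 * c)%:E)%E.
  apply: le_trans EG; apply: expectation_le => //.
  - exact: measurable_realfun.measurable_funB.
  - by move=> w; rewrite subr_ge0 YmaxS le_max lexx.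
  - exact: aeW.
have EB2 : 2 * c <= 6 * Num.sqrt (ln (k%:R) / k%:R) by exact: ln_bound.
rewrite (_ : [set w | _] = setT).
  rewrite probability_setT lee_fin.
  have : 0 <= (Num.sqrt (k%:R : R))^-1 by rewrite invr_ge0 sqrtr_ge0.
  lra.
apply/seteqP; split => // w _ /=.
apply: (le_trans EB); apply: lee_paddl; last by rewrite lee_fin.
apply: integral_ge0 => s _; rewrite lee_fin.
have e0 : 0 <= ecdf k X w s.
  by rewrite /ecdf mulr_ge0 ?invr_ge0 ?ler0n // sumr_ge0 // => i _; exact: ler0n.
have e1 : ecdf k X w s <= 1.
  rewrite /ecdf ler_pdivrMl ?ltr0n // mulr1.
  apply: (@le_trans _ _ (\sum_(i < k) (1:R))).
    by apply: ler_sum => i _; case: (X i w <= s)%R.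
  by rewrite sumr_const card_ord.
apply: mulr_ge0; first exact: exprn_ge0.
by rewrite subr_ge0.
Qed.
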